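(* Let $(G,f)$ be any weighted graph. Then $$\max\{\Delta_f(G)+1,\ \Gamma_f(G)\}=\max\{\Delta_f(G)+1,\ W_f(G)\}.$$
   Context: Graphs are finite and undirected; multiple edges are allowed, loops are not. A weighted graph $(G,f)$ is a graph $G$ together with a function $f\colon V(G)\to\mathbb{Z}_{>0}$. For $U\subseteq V(G)$ write $f(U)=\sum_{v\in U}f(v)$, and $f(H)=f(V(H))$ for a subgraph $H$. $E[U]$ denotes the set of edges with both ends in $U$. $\partial U$ denotes the set of edges with exactly one end in $U$. $d_G(v)$ is the degree of $v$, counting multiple edges with multiplicity. The fractional maximum $f$-degree is $\Delta_f^*(G)=\max_{v\in V(G)} d_G(v)/f(v)$. The maximum $f$-degree is $\Delta_f(G)=\lceil \Delta_f^*(G)\rceil$. The fractional $f$-density is $W_f^*(G)=\max\{ |E(H)|/\lfloor \tfrac12 f(H)\rfloor : H\subseteq G \text{ a subgraph},\ |V(H)|\ge 2\}$, with $W_f^*(G)=0$ if $|V(G)|<2$. The $f$-density is $W_f(G)=\lceil W_f^*(G)\rceil$. Define $$\Gamma_f^*(G)=\max\left\{\frac{|E[U]|+|F|}{\lfloor \tfrac12 (f(U)+|F|)\rfloor} : U\subseteq V(G),\ F\subseteq \partial U,\ f(U)+|F|\ge 2\right\},$$ with $\Gamma_f^*(G)=0$ if $G$ has no edge. Set $\Gamma_f(G)=\lceil \Gamma_f^*(G)\rceil$. *)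

(* Defs.v *)
From HB Require Import structures.
From mathcomp Require Import all_boot all_order all_algebra.
Set Implicit Arguments. Unset Strict Implicit. Unset Printing Implicit Defensive.
Import Order.TTheory GRing.Theory Num.Theory.

(* A finite multigraph (no loops) is given by a finite vertex type V, a finite
   edge type E, and two endpoint maps s t : E -> V with s e != t e.
   Parallel edges are distinct elements of E with the same endpoints. *)

Section WG.
Variables (V E : finType) (s t : E -> V) (f : V -> nat).

Definition deg (v : V) : nat := #|[set e : E | (s e == v) || (t e == v)]|.

Definition fw (U : {set V}) : nat := \sum_(v in U) f v.

Definition edges_in (U : {set V}) : {set E} :=
  [set e : E | (s e \in U) && (t e \in U)].

Definition bd (U : {set V}) : {set E} :=
  [set e : E | (s e \in U) != (t e \in U)].

Definition ratio (a b : nat) : rat := (a%:R / b%:R)%R.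

Definition Delta_star : rat :=
  \big[Order.max/0%R]_(v : V) ratio (deg v) (f v).
Definition Delta_f : int := Num.ceil Delta_star.

Definition W_star : rat :=
  \big[Order.max/0%R]_(U : {set V} | 2 <= #|U|)
    \big[Order.max/0%R]_(S : {set E} | S \subset edges_in U)
       ratio #|S| (fw U)./2.
Definition W_f : int := Num.ceil W_star.

Definition Gamma_star : rat :=
  if #|E| == 0 then 0%R else
  \big[Order.max/0%R]_(U : {set V})
    \big[Order.max/0%R]_(F : {set E} | (F \subset bd U) && (2 <= fw U + #|F|))
       ratio (#|edges_in U| + #|F|) (fw U + #|F|)./2.
Definition Gamma_f : int := Num.ceil Gamma_star.

End WG.

(* Main.v *)
Require Import Defs.
From mathcomp Require Import all_boot all_order all_algebra.
From mathcomp Require Import zify ring lra.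
Import Order.TTheory GRing.Theory Num.Theory.
Set Implicit Arguments. Unset Strict Implicit.

Lemma arith_key (e m n a : nat) : 2 * e + m <= n * a -> 0 < m ->
  e + m <= n.+1 * ((a + m)./2).
Proof.
move=> h hm.
have ha : 0 < a by case: a h => [|a] //; rewrite muln0; lia.
have hq := odd_double_half (a + m).
set q := (a + m)./2 in hq *.
have : a + m <= 2 * q + 1 by move: hq; case: (odd _) => /= <-; lia.
nia.
Qed.

Lemma ratio_le_nat (a b c : nat) : 0 < b -> a <= c * b -> (Defs.ratio a b <= (c%:R : rat))%R.
Proof.
move=> hb h; rewrite /Defs.ratio ler_pdivrMr ?ltr0n // -natrM ler_nat mulnC.
by rewrite mulnC.
Qed.

Section G.
Variables (V E : finType) (s t : E -> V) (f : V -> nat).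
Hypothesis noloop : forall e : E, s e != t e.

Lemma sum_eq1 (U : {set V}) (x : V) : \sum_(i in U) ((x == i) : nat) = (x \in U).
Proof.
rewrite (bigID (pred1 x)) /= [X in _ + X]big1 ?addn0; last by move=> i /andP[_ /negbTE]; rewrite eq_sym => ->.
case hx: (x \in U).
  by rewrite (big_pred1 x) ?eqxx // => i /=; case: (i =P x) => [->|_]; rewrite ?hx ?andbT ?andbF ?eqxx.
by rewrite big_pred0 // => i /=; case: (i =P x) => [->|_]; rewrite ?hx ?andbT ?andbF.
Qed.

Lemma double_count (U : {set V}) (F : {set E}) : F \subset bd s t U ->
  2 * #|edges_in s t U| + #|F| <= \sum_(v in U) deg s t v.
Proof.
move=> hF.
have -> : \sum_(v in U) deg s t v = \sum_(e : E) ((s e \in U) + (t e \in U)).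
  rewrite /deg.
  rewrite /deg; under eq_bigr do rewrite -sum1_card big_mkcond /=.
  rewrite exchange_big /=; apply: eq_bigr => e _.
  transitivity (\sum_(i in U) ((s e == i) + (t e == i))); last by rewrite big_split /= !sum_eq1.
  apply: eq_bigr => i _; rewrite inE.
  have := noloop e; case: (s e =P i) => hs; case: (t e =P i) => ht //=; by rewrite hs ht eqxx.
rewrite -!sum1_card [X in 2 * X]big_mkcond [X in _ + X]big_mkcond /= big_distrr /= -big_split /=.
apply: leq_sum => e _; move/subsetP: hF => /(_ e); rewrite !inE.
by case: (s e \in U); case: (t e \in U); case: (e \in F) => //= /(_ isT).
Qed.

Hypothesis fpos : forall v : V, 0 < f v.

Lemma fw_ge_card (U : {set V}) : #|U| <= fw f U.
Proof. by rewrite -sum1_card /fw; apply: leq_sum => v _; exact: fpos. Qed.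

Lemma DeltaP : exists n : nat, Delta_f s t f = Posz n /\
  forall v, deg s t v <= n * f v.
Proof.
have h0 : (0 <= Delta_f s t f)%R.
  by rewrite /Delta_f -(ceil0 rat); apply: le_ceil; exact: bigmax_ge_id.
case hD: (Delta_f s t f) h0 => [n|n] // _; exists n; split => // v.
have h1 : (Defs.ratio (deg s t v) (f v) <= (n%:R : rat))%R.
  have h2 := ceil_ge (Delta_star s t f).
  rewrite -/(Delta_f s t f) hD in h2.
  apply: le_trans h2.
  rewrite /Delta_star. exact: le_bigmax.
move: h1; rewrite /Defs.ratio ler_pdivrMr ?ltr0n ?fpos // -natrM ler_nat.
by [].
Qed.

End G.

Lemma half_pos x : 2 <= x -> 0 < x./2.
Proof. by case: x => [|[|x]]. Qed.

Theorem lemma1 (V E : finType) (s t : E -> V) (f : V -> nat)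
  (noloop : forall e : E, s e != t e)
  (fpos : forall v : V, 0 < f v) :
  Order.max (Delta_f s t f + 1)%R (Gamma_f s t f)
  = Order.max (Delta_f s t f + 1)%R (W_f s t f).
Proof.
have [n [hD hdeg]] := @DeltaP V E s t f fpos.
set k := Order.max (Delta_f s t f + 1)%R (W_f s t f).
have hk1 : ((n.+1)%:R <= (k%:~R : rat))%R.
  rewrite -[(n.+1%:R)%R]/(((Posz n.+1)%:~R)%R : rat) ler_int /k le_max hD.
  by rewrite -addn1 PoszD lexx.
have hkW : (W_star s t f <= (k%:~R : rat))%R.
  by apply: le_trans (ceil_ge _) _; rewrite -/(W_f s t f) ler_int /k le_max lexx orbT.
have hk0 : (0 <= (k%:~R : rat))%R by apply: le_trans hk1.
have hWG : (W_f s t f <= Gamma_f s t f)%R.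
  have hG0 : (0 <= Gamma_star s t f)%R.
    by rewrite /Gamma_star; case: ifP => // _; exact: bigmax_ge_id.
  rewrite /W_f /Gamma_f; apply: le_ceil; rewrite /W_star.
  apply/bigmax_leP; split => // U hU; apply/bigmax_leP; split => // S hS.
  rewrite /Gamma_star; case: ifP => hE.
    have := max_card (mem S); move/eqP: hE => -> ; rewrite leqn0 => /eqP hS0.
    by rewrite /Defs.ratio hS0 mul0r.
  apply: (bigmax_sup U) => //; apply: (bigmax_sup set0).
    by rewrite sub0set cards0 addn0 (leq_trans hU (fw_ge_card fpos U)).
  rewrite cards0 !addn0 /Defs.ratio ler_wpM2r ?invr_ge0 ?ler0n // ler_nat.
  exact: subset_leq_card.
have hGk : (Gamma_f s t f <= k)%R.
  rewrite /Gamma_f ceil_le_int /Gamma_star; case: ifP => // hE.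
  apply/bigmax_leP; split => // U _; apply/bigmax_leP; split => // F /andP[hF h2].
  case hm: (#|F| == 0).
    move/eqP: hm => hm; move: h2; rewrite hm !addn0 => h2.
    case hU: (2 <= #|U|).
      apply: le_trans hkW; rewrite /W_star.
      apply: (bigmax_sup U) => //; exact: (bigmax_sup (edges_in s t U)).
    have -> : #|edges_in s t U| = 0.
      apply/eqP; rewrite cards_eq0; apply/eqP/setP => e; rewrite !inE.
      apply/negP => /andP[h1 h3].
      have hU1 : #|U| <= 1 by rewrite leqNgt hU.
      move/card_le1_eqP: hU1 => /(_ _ _ h1 h3) he.
      by move: (noloop e); rewrite he eqxx.
    by rewrite /Defs.ratio mul0r.
  apply: le_trans hk1; apply: ratio_le_nat; first exact: half_pos.
  apply: arith_key; last by rewrite lt0n hm.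
  apply: leq_trans (double_count noloop hF) _.
  rewrite /fw big_distrr /=; apply: leq_sum => v _; exact: hdeg.
apply/eqP; rewrite eq_le; apply/andP; split.
  by rewrite ge_max le_max lexx hGk.
by rewrite ge_max !le_max lexx hWG orbT.
Qed.
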